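(* Fix integers $K\ge2$, $M>N\ge1$, positive reals $P_r,d_{dr},\alpha$ and, for $k\in\mathcal K=\{1,\dots,K\}$, positive reals $P_k,d_{dk},d_{rk}$ and weights $\mu_k\in[0,1]$ with $\sum_{k}\mu_k=1$. Let $\mathcal C(x)=\log(1+x)$ and for $Q_1,\dots,Q_K>0$ define $I_k=\mathcal{C}\big(\tfrac{P_k(M-N)}{d_{dk}^{\alpha}}+\tfrac{P_k}{(d_{rk}^{\alpha}/N)+Q_k}\big)$, $J_k=\mathcal{C}\big(\tfrac{P_k(M-N)}{d_{dk}^{\alpha}}\big)+\xi$, $J_\Lambda=\xi+\sum_{k\in\Lambda}\mathcal{C}\big(\tfrac{P_k(M-N)}{d_{dk}^{\alpha}}\big)$ for $\Lambda\subseteq\mathcal K$, where $\xi=N\mathcal{C}\big(\tfrac{P_r(M-N)}{Nd_{dr}^{\alpha}}\big)-\sum_{k=1}^K\mathcal{C}\big(\tfrac{d_{rk}^{\alpha}}{NQ_k}\big)$. Consider $$\max_{\{R_k\},\{Q_k\}}\sum_{k=1}^K\mu_kR_k\quad\text{s.t. } R_k\le\min\{I_k,J_k\},\ Q_k\ge0\ (k\in\mathcal K),\quad \sum_{k\in\Lambda}R_k\le J_\Lambda\ \ \forall\Lambda\subseteq\mathcal K.$$ Let $a_k=1+P_k(M-N)/d_{dk}^\alpha$, $b_k=P_kN/d_{rk}^\alpha$, $\omega_k=\frac{a_k+b_k}{\mu_kb_k}$, $\lambda_s=\big(1+\frac{P_r(M-N)}{Nd_{dr}^\alpha}\big)^N$,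 and assume the users are indexed so that $\omega_1\le\omega_2\le\dots\le\omega_K$. Let $\upsilon^*$ be the largest $\upsilon\in\{1,\dots,K\}$ such that $$\prod_{k=1}^{\upsilon}\Big(\omega_{\upsilon}-\frac1{\mu_k}\Big)\le\lambda_s\prod_{k=1}^{\upsilon}\frac{a_k}{\mu_kb_k},$$ let $x_s$ be the unique positive real root of $f(x)=\prod_{k=1}^{\upsilon^*}\big(x+\omega_{\upsilon^*}-\frac1{\mu_k}\big)-\lambda_s\prod_{k=1}^{\upsilon^*}\frac{a_k}{\mu_kb_k}$, and set $\lambda_k^*=\frac{\mu_kb_k}{a_k}\big(x_s+\omega_{\upsilon^*}-\frac1{\mu_k}\big)$ for $k\le\upsilon^*$ and $\lambda_k^*=1$ for $k>\upsilon^*$. Then optimal quantization noise variances for the problem are $$Q_k^*=\frac{(d_{rk}^{\alpha}/N)\,a_k+P_k}{a_k(\lambda_k^*-1)},\qquad k\in\mathcal K.$$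
   Context: When $\lambda_k^*=1$ the formula gives $Q_k^*=+\infty$, meaning user $k$'s stream is not quantized/forwarded by the relay; then the terms involving $Q_k$ are understood as their limits as $Q_k\to\infty$ (i.e. $\frac{P_k}{(d_{rk}^\alpha/N)+Q_k}\to0$, $\mathcal C(\frac{d_{rk}^\alpha}{NQ_k})\to0$), and optimality is in the sense of the supremum. These quantities describe the rate region of quantize-forward relaying with joint decoding in a $K$-user massive MIMO heterogeneous network (relay with $N$ antennas, destination with $M$ antennas, zero-forcing detection, pathloss distances $d$ with exponent $\alpha$). *)

(* Defs.v *)
From mathcomp Require Import all_boot all_order all_algebra.
From mathcomp Require Import all_classical all_reals all_analysis.
Set Implicit Arguments. Unset Strict Implicit. Unset Printing Implicit Defensive.
Import Order.TTheory GRing.Theory Num.Theory.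
Local Open Scope ring_scope.

(* Users are indexed by 'I_K (0-based: ordinal k stands for user k+1). *)

(* C(x) = log(1+x) (natural log; the base does not affect the optimizer) *)
Definition Cap (R : realType) (x : R) : R := ln (1 + x).

(* A quantization noise variance is an element of (0, +oo]:
   [Some q] is the finite value q, [None] is Q = +oo (stream not forwarded);
   Q-dependent terms at +oo are their limits (both are 0). *)
Definition qgain (R : realType) (N : nat) (alpha Pk drk : R) (Q : option R) : R :=
  match Q with Some q => Pk / (drk `^ alpha / N%:R + q) | None => 0 end.

Definition qpen (R : realType) (N : nat) (alpha drk : R) (Q : option R) : R :=
  match Q with Some q => Cap (drk `^ alpha / (N%:R * q)) | None => 0 end.

Definition dsnr (R : realType) (M N : nat) (alpha Pk ddk : R) : R :=
  Pk * (M%:R - N%:R) / ddk `^ alpha.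

Definition xi (R : realType) (K M N : nat) (Pr ddr alpha : R)
  (dr : 'I_K -> R) (Q : 'I_K -> option R) : R :=
  N%:R * Cap (Pr * (M%:R - N%:R) / (N%:R * ddr `^ alpha))
  - \sum_(k < K) qpen N alpha (dr k) (Q k).

Definition Irate (R : realType) (K M N : nat) (alpha : R)
  (P dd dr : 'I_K -> R) (Q : 'I_K -> option R) (k : 'I_K) : R :=
  Cap (dsnr M N alpha (P k) (dd k) + qgain N alpha (P k) (dr k) (Q k)).

Definition Jrate (R : realType) (K M N : nat) (Pr ddr alpha : R)
  (P dd dr : 'I_K -> R) (Q : 'I_K -> option R) (k : 'I_K) : R :=
  Cap (dsnr M N alpha (P k) (dd k)) + xi M N Pr ddr alpha dr Q.

Definition JLam (R : realType) (K M N : nat) (Pr ddr alpha : R)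
  (P dd dr : 'I_K -> R) (Q : 'I_K -> option R) (L : {set 'I_K}) : R :=
  xi M N Pr ddr alpha dr Q + \sum_(k in L) Cap (dsnr M N alpha (P k) (dd k)).

Definition feasible (R : realType) (K M N : nat) (Pr ddr alpha : R)
  (P dd dr : 'I_K -> R) (Rv : 'I_K -> R) (Q : 'I_K -> option R) : Prop :=
  [/\ (forall k, Rv k <= Irate M N alpha P dd dr Q k /\
                 Rv k <= Jrate M N Pr ddr alpha P dd dr Q k),
      (forall k, if Q k is Some q then 0 < q else true) &
      (forall L : {set 'I_K}, \sum_(k in L) Rv k <= JLam M N Pr ddr alpha P dd dr Q L)].

Definition objective (R : realType) (K : nat) (mu Rv : 'I_K -> R) : R :=
  \sum_(k < K) mu k * Rv k.

Definition acoef (R : realType) (K M N : nat) (alpha : R) (P dd : 'I_K -> R) (k : 'I_K) : R :=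
  1 + dsnr M N alpha (P k) (dd k).

Definition bcoef (R : realType) (K N : nat) (alpha : R) (P dr : 'I_K -> R) (k : 'I_K) : R :=
  P k * N%:R / dr k `^ alpha.

Definition omega (R : realType) (K M N : nat) (alpha : R) (P dd dr mu : 'I_K -> R) (k : 'I_K) : R :=
  (acoef M N alpha P dd k + bcoef N alpha P dr k) / (mu k * bcoef N alpha P dr k).

Definition lambda_s (R : realType) (M N : nat) (Pr ddr alpha : R) : R :=
  (1 + Pr * (M%:R - N%:R) / (N%:R * ddr `^ alpha)) ^+ N.

(* condition defining upsilon*, for upsilon = u+1 with u : 'I_K *)
Definition ups_cond (R : realType) (K M N : nat) (Pr ddr alpha : R)
  (P dd dr mu : 'I_K -> R) (u : 'I_K) : Prop :=
  \prod_(k < K | (k <= u)%N) (omega M N alpha P dd dr mu u - 1 / mu k)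
  <= lambda_s M N Pr ddr alpha *
     \prod_(k < K | (k <= u)%N) (acoef M N alpha P dd k / (mu k * bcoef N alpha P dr k)).

(* the polynomial f, for upsilon* = u+1 *)
Definition fpoly (R : realType) (K M N : nat) (Pr ddr alpha : R)
  (P dd dr mu : 'I_K -> R) (u : 'I_K) (x : R) : R :=
  \prod_(k < K | (k <= u)%N) (x + omega M N alpha P dd dr mu u - 1 / mu k)
  - lambda_s M N Pr ddr alpha *
    \prod_(k < K | (k <= u)%N) (acoef M N alpha P dd k / (mu k * bcoef N alpha P dr k)).

Definition lambda_star (R : realType) (K M N : nat) (alpha : R)
  (P dd dr mu : 'I_K -> R) (u : 'I_K) (xs : R) (k : 'I_K) : R :=
  if (k <= u)%N then
    mu k * bcoef N alpha P dr k / acoef M N alpha P dd k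
      * (xs + omega M N alpha P dd dr mu u - 1 / mu k)
  else 1.

Definition Qstar (R : realType) (K M N : nat) (alpha : R)
  (P dd dr mu : 'I_K -> R) (u : 'I_K) (xs : R) (k : 'I_K) : option R :=
  let l := lambda_star M N alpha P dd dr mu u xs k in
  if l == 1 then None
  else Some ((dr k `^ alpha / N%:R * acoef M N alpha P dd k + P k)
             / (acoef M N alpha P dd k * (l - 1))).

(* Main.v *)
Require Import Defs.
From mathcomp Require Import all_boot all_order all_algebra.
From mathcomp Require Import all_classical all_reals all_analysis.
From mathcomp Require Import ring lra zify.
Set Implicit Arguments. Unset Strict Implicit. Unset Printing Implicit Defensive.
Import Order.TTheory GRing.Theory Num.Theory.
Local Open Scope ring_scope.

Lemma Irate_some (R : realType) (K M N : nat) (alpha : R) (P dd dr : 'I_K -> R)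
  (Q : 'I_K -> option R) (k : 'I_K) (q : R) :
  (0 < N)%N -> 0 < dr k -> 0 < q -> Q k = Some q ->
  Irate M N alpha P dd dr Q k =
  ln (acoef M N alpha P dd k + bcoef N alpha P dr k *
      (dr k `^ alpha / N%:R / (dr k `^ alpha / N%:R + q))).
Proof.
move=> N0 d0 q0 hq; rewrite /Irate /Cap /qgain hq /acoef /bcoef.
have n0 : 0 < N%:R :> R by rewrite ltr0n.
have p0 : 0 < dr k `^ alpha by apply: powR_gt0.
have s0 : 0 < dr k `^ alpha / N%:R by apply: divr_gt0.
have := mulr_gt0 q0 n0 => hh; congr ln; field; rewrite !gt_eqF //; lra.
Qed.

Lemma Irate_none (R : realType) (K M N : nat) (alpha : R) (P dd dr : 'I_K -> R)
  (Q : 'I_K -> option R) (k : 'I_K) :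
  Q k = None -> Irate M N alpha P dd dr Q k = ln (acoef M N alpha P dd k).
Proof. by move=> hq; rewrite /Irate /Cap /qgain hq addr0. Qed.

Lemma qpen_some (R : realType) (N : nat) (alpha d q : R) :
  (0 < N)%N -> 0 < d -> 0 < q ->
  qpen N alpha d (Some q) = ln (1 + d `^ alpha / N%:R / q).
Proof.
move=> N0 d0 q0; rewrite /qpen /Cap.
have n0 : 0 < N%:R :> R by rewrite ltr0n.
congr ln; field; rewrite !gt_eqF //.
Qed.

Lemma ln_prod (R : realType) (I : Type) (r : seq I) (Pr : pred I) (F : I -> R) :
  (forall i, Pr i -> 0 < F i) ->
  ln (\prod_(i <- r | Pr i) F i) = \sum_(i <- r | Pr i) ln (F i).
Proof.
move=> hF; elim: r => [|x r IH]; first by rewrite !big_nil ln1.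
rewrite !big_cons; case: ifP => // hx.
rewrite lnM ?posrE ?IH //; first exact: hF.
by apply: prodr_gt0.
Qed.

Lemma ln_sub_le (R : realType) (y z : R) : 0 < y -> 0 < z -> ln y - ln z <= y / z - 1.
Proof.
move=> y0 z0; rewrite -ln_div ?posrE //.
have E : 1 + (y / z - 1) = y / z by lra.
have := @le_ln1Dx R (y / z - 1); rewrite E; apply.
have : 0 < y / z by apply: divr_gt0.
lra.
Qed.

Definition Ff (R : realType) (mu nu a b z : R) :=
  (mu - nu) * (ln (a + b * z) - ln a) + nu * ln (1 - z).

Lemma Fbound (R : realType) (mu nu a b t t0 : R) :
  0 < mu -> 0 < nu -> 0 < a -> 0 < b -> 0 <= t < 1 -> 0 <= t0 < 1 ->
  (t0 = 1 - nu * ((a + b) / (mu * b)) \/ (t0 = 0 /\ mu * b <= nu * (a + b))) ->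
  Ff mu nu a b t <= Ff mu nu a b t0.
Proof.
move=> mu0 nu0 a0 b0 /andP[t0' t1] /andP[s0 s1] H.
rewrite /Ff.
have ebt : 0 < a + b * t by have := mulr_ge0 (ltW b0) t0'; lra.
have ebs : 0 < a + b * t0 by have := mulr_ge0 (ltW b0) s0; lra.
have h1 := ln_sub_le ebt ebs.
have h2 : ln (1 - t) - ln (1 - t0) <= (1 - t) / (1 - t0) - 1.
  by apply: ln_sub_le; lra.
case: (leP mu nu) => hmn.
  have et0 : t0 = 0.
    case: H => [E|[]//]; exfalso.
    have : nu * (a + b) / (mu * b) <= 1 by rewrite -mulrA; lra.
    rewrite ler_pdivrMr ?mulr_gt0 // mul1r.
    have := ler_wpM2r (ltW b0) hmn.
    have := mulr_gt0 nu0 a0.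
    lra.
  subst t0; rewrite mulr0 addr0 subrr mulr0 subr0 ln1 mulr0.
  have la : ln a <= ln (a + b * t).
    by rewrite ler_ln ?posrE //; have := mulr_ge0 (ltW b0) t0'; lra.
  have l1 : ln (1 - t) <= 0 by apply: ln_le0; lra.
  have := mulr_le0_ge0 (x:=mu - nu) (y:=ln (a + b * t) - ln a) ltac:(lra) ltac:(lra).
  have := mulr_ge0_le0 (x:=nu) (y:=ln (1 - t)) ltac:(lra) l1.
  lra.
have mn0 : 0 <= mu - nu by lra.
have k1 := ler_wpM2l mn0 h1.
have k2 := ler_wpM2l (ltW nu0) h2.
suff K : (mu - nu) * ((a + b * t) / (a + b * t0) - 1) + nu * ((1 - t) / (1 - t0) - 1) <= 0.
  move: k1 k2 K; rewrite !mulrBr; lra.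
case: H => [E|[E hb]].
  have -> : (mu - nu) * ((a + b * t) / (a + b * t0) - 1) + nu * ((1 - t) / (1 - t0) - 1) = 0.
    have f1 : a + b * t0 != 0 by rewrite gt_eqF.
    have f2 : 1 - t0 != 0 by rewrite gt_eqF // subr_gt0.
    move: f1 f2; rewrite E => f1 f2.
    have g1 : 0 < (mu - nu) * (a + b) by apply: mulr_gt0; lra.
    have g2 : 0 < nu * (a + b) by apply: mulr_gt0; lra.
    field; rewrite ?f1 ?f2 ?gt_eqF ?mulr_gt0 //; move: g1 g2; rewrite !mulrDr !mulrDl; lra.
  by rewrite lexx.
subst t0; rewrite mulr0 addr0 subr0 divr1.
have -> : (a + b * t) / a - 1 = b * t / a by field; rewrite gt_eqF.
have hc : (mu - nu) * b / a <= nu.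
  by rewrite ler_pdivrMr //; lra.
have := ler_wpM2r t0' hc.
rewrite -!mulrA (mulrC t) !mulrA.
lra.
Qed.

Lemma conv (R : realType) (mu nu a b s q : R) :
  0 < a -> 0 < b -> 0 < s -> 0 < q ->
  mu * (ln (a + b * (s / (s + q))) - ln a)
  - nu * ((ln (a + b * (s / (s + q))) - ln a) + ln (1 + s / q))
  = Ff mu nu a b (s / (s + q)).
Proof.
move=> a0 b0 s0 q0.
have sq : 0 < s + q by lra.
have -> : 1 + s / q = (1 - s / (s + q))^-1.
  by field; rewrite ?gt_eqF //; lra.
rewrite lnV ?posrE; last first.
  by rewrite subr_gt0 ltr_pdivrMr // mul1r; lra.
rewrite /Ff; lra.
Qed.

Lemma tstar (R : realType) (mu a b s P y : R) :
  0 < mu -> 0 < a -> 0 < b -> 0 < s -> P = b * s ->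
  (a + b) / (mu * b) < y ->
  let lam := mu * b / a * (y - 1 / mu) in
  let q := (s * a + P) / (a * (lam - 1)) in
  [/\ 1 < lam, 0 < q,
      s / (s + q) = 1 - y^-1 * ((a + b) / (mu * b)) &
      ln (a + b * (s / (s + q))) - ln a + ln (1 + s / q) = ln lam].
Proof.
move=> mu0 a0 b0 s0 hP hy lam q.
have y0 : 0 < y.
  by apply: lt_trans hy; apply: divr_gt0; [lra| apply: mulr_gt0].
have hy' : a + b < mu * b * y by move: hy; rewrite ltr_pdivrMr ?mulr_gt0 // mulrC.
have el : lam - 1 = (mu * b * y - (a + b)) / a.
  by rewrite /lam; field; rewrite ?gt_eqF.
have l1 : 0 < lam - 1 by rewrite el; apply: divr_gt0; lra.
have q0 : 0 < q.
  rewrite /q hP; apply: divr_gt0; last by apply: mulr_gt0.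
  have := mulr_gt0 s0 a0; have := mulr_gt0 b0 s0; lra.
split => //; first lra.
  have d1 : 0 < mu * b * y - (a + b) by lra.
  have d2 : 0 < s * (mu * b * y - (a + b)) + (s * a + b * s).
    have := mulr_gt0 s0 d1; have := mulr_gt0 s0 a0; have := mulr_gt0 b0 s0; lra.
  rewrite /q hP el; field.
  by rewrite !gt_eqF.
have sq : 0 < s + q by lra.
have t0 : 0 < s / (s + q) by apply: divr_gt0.
have x0 : 0 < a + b * (s / (s + q)) by have := mulr_gt0 b0 t0; lra.
have z0 : 0 < 1 + s / q by have := divr_gt0 s0 q0; lra.
rewrite -ln_div ?posrE // -lnM ?posrE ?divr_gt0 //; congr ln.
have -> : lam = 1 + (lam - 1) by lra.
rewrite /q hP; field.
rewrite !gt_eqF //; have := mulr_gt0 s0 (mulr_gt0 a0 l1); have := mulr_gt0 s0 a0; have := mulr_gt0 b0 s0; lra.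
Qed.

Lemma perk_gen (R : realType) (mu nu Rv la G p phi : R) :
  0 < mu -> 0 < nu -> 0 <= p -> 0 <= phi -> Rv - la <= G ->
  mu * G - nu * (G + p) <= phi ->
  mu * Rv <= phi + nu * ((if 0 < Rv - la then Rv - la else 0) + p) + mu * la.
Proof.
move=> mu0 nu0 p0 phi0 hrG hb.
have hnp := mulr_ge0 (ltW nu0) p0.
case: ifP => hr0.
  case: (leP nu mu) => hmn.
    have := ler_wpM2l (x := mu - nu) ltac:(lra) hrG.
    lra.
  have := mulr_gt0 (x := nu - mu) ltac:(lra) hr0.
  lra.
have hr1 : Rv - la <= 0 by rewrite leNgt hr0.
have := mulr_ge0_le0 (ltW mu0) hr1.
lra.
Qed.

Lemma sum_lin (R : realType) (K : nat) (F1 F2 F3 F4 F5 : 'I_K -> R) (c : R) :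
  \sum_(i < K) (F1 i - c * F2 i + c * (F3 i + F4 i) + F5 i) =
  \sum_(i < K) F1 i - c * \sum_(i < K) F2 i
  + c * (\sum_(i < K) F3 i + \sum_(i < K) F4 i) + \sum_(i < K) F5 i.
Proof.
rewrite -big_split /= !mulr_sumr -sumrB -!big_split /=.
by apply: eq_bigr.
Qed.

Theorem theorem6 (R : realType) (K M N : nat) (Pr ddr alpha : R)
  (P dd dr mu : 'I_K -> R) (us : 'I_K) (xs : R) :
  (2 <= K)%N -> (1 <= N)%N -> (N < M)%N ->
  0 < Pr -> 0 < ddr -> 0 < alpha ->
  (forall k, 0 < P k) -> (forall k, 0 < dd k) -> (forall k, 0 < dr k) ->
  (forall k, 0 < mu k <= 1) -> \sum_(k < K) mu k = 1 ->
  (forall i j : 'I_K, (i <= j)%N ->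
     omega M N alpha P dd dr mu i <= omega M N alpha P dd dr mu j) ->
  ups_cond M N Pr ddr alpha P dd dr mu us ->
  (forall u : 'I_K, (us < u)%N -> ~ ups_cond M N Pr ddr alpha P dd dr mu u) ->
  0 < xs -> fpoly M N Pr ddr alpha P dd dr mu us xs = 0 ->
  exists Rs : 'I_K -> R,
    feasible M N Pr ddr alpha P dd dr Rs (Qstar M N alpha P dd dr mu us xs) /\
    forall (Rv : 'I_K -> R) (Q : 'I_K -> R),
      feasible M N Pr ddr alpha P dd dr Rv (fun k => Some (Q k)) ->
      objective mu Rv <= objective mu Rs.
Proof.
move=> K2 N1 NM Pr0 ddr0 al0 P0 dd0 dr0 mu01 musum omono hups hnot xs0 hf.
have n0 : 0 < N%:R :> R by rewrite ltr0n.
have mn0 : 0 < M%:R - N%:R :> R by rewrite subr_gt0 ltr_nat.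
have mu0 : forall k, 0 < mu k by move=> k; case/andP: (mu01 k).
pose a k := acoef M N alpha P dd k.
pose b k := bcoef N alpha P dr k.
pose s k := dr k `^ alpha / N%:R.
pose om k := omega M N alpha P dd dr mu k.
have omE : forall k, om k = (a k + b k) / (mu k * b k) by [].
have a1 : forall k, 1 < a k.
  move=> k; rewrite /a /acoef /dsnr ltrDl; apply: divr_gt0; last exact: powR_gt0.
  exact: mulr_gt0.
have a0 : forall k, 0 < a k by move=> k; apply: lt_trans (a1 k).
have b0 : forall k, 0 < b k.
  move=> k; rewrite /b /bcoef; apply: divr_gt0; last exact: powR_gt0.
  exact: mulr_gt0.
have s0 : forall k, 0 < s k by move=> k; apply: divr_gt0 => //; exact: powR_gt0.
have hP : forall k, P k = b k * s k.
  move=> k; rewrite /b /s /bcoef; have := powR_gt0 alpha (dr0 k) => hh.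
  field; rewrite !gt_eqF //.
have omsub : forall k, om k - 1 / mu k = a k / (mu k * b k).
  move=> k; rewrite omE; have := mu0 k; have := b0 k => hb hm.
  field; rewrite !gt_eqF //.
pose y := xs + om us.
have act : forall k : 'I_K, (k <= us)%N -> om k < y.
  by move=> k hk; have := omono _ _ hk; rewrite /y -/(om k) -/(om us); lra.
have lsE : \prod_(k < K | (k <= us)%N) (y - 1 / mu k) =
    lambda_s M N Pr ddr alpha * \prod_(k < K | (k <= us)%N) (a k / (mu k * b k)).
  by move: hf; rewrite /fpoly; set X := lambda_s _ _ _ _ _; set Y := \prod_(_ < _ | _) _; lra.
have inact : forall k : 'I_K, (us < k)%N -> y <= om k.
  move=> k hk.
  have uK : (us.+1 < K)%N by apply: leq_ltn_trans hk (ltn_ord k).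
  pose u : 'I_K := Ordinal uK.
  have huk : om u <= om k by apply: omono.
  suff : y <= om u by lra.
  case: (leP y (om u)) => // hlt; exfalso.
  apply: (hnot u (ltnSn us)).
  rewrite /ups_cond -/(om u).
  rewrite (bigD1 u) //= [X in _ <= _ * X](bigD1 u) //=.
  have eqP' : forall F : 'I_K -> R, \prod_(i < K | (i <= u)%N && (i != u)) F i =
                 \prod_(i < K | (i <= us)%N) F i.
    move=> F; apply: eq_bigl => i; rewrite -(inj_eq val_inj) /=; lia.
  rewrite !eqP' omsub.
  have cpos : 0 < a u / (mu u * b u) by apply: divr_gt0 => //; apply: mulr_gt0.
  have le1 : \prod_(i < K | (i <= us)%N) (om u - 1 / mu i) <=
             \prod_(i < K | (i <= us)%N) (y - 1 / mu i).
    apply: ler_prod => i hi; apply/andP; split; last by lra.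
    have hiu : (i <= u)%N by apply: leq_trans hi (leqnSn _).
    have := omono _ _ hiu; have := omsub i.
    have : 0 < a i / (mu i * b i) by apply: divr_gt0 => //; apply: mulr_gt0.
    rewrite -/(om i) -/(om u); lra.
  rewrite lsE in le1.
  have := ler_wpM2l (ltW cpos) le1.
  move=> H; apply: le_trans H _; rewrite /a /b le_eqVlt; apply/orP; left; apply/eqP; ring.
pose nu := y^-1.
have y0 : 0 < y.
  have h1 := omsub us.
  have h2 : 0 < a us / (mu us * b us) by apply: divr_gt0 => //; apply: mulr_gt0.
  have h3 : 0 < 1 / mu us by rewrite div1r invr_gt0.
  rewrite /y; lra.
have nu0 : 0 < nu by rewrite invr_gt0.
pose Qs := Qstar M N alpha P dd dr mu us xs.
pose g k := Irate M N alpha P dd dr Qs k - ln (a k).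
pose p k := qpen N alpha (dr k) (Qs k).
pose phi k := mu k * g k - nu * (g k + p k).
pose lam k := mu k * b k / a k * (y - 1 / mu k).
have user : forall k, [/\ 0 <= g k /\ 0 <= p k, (if Qs k is Some q then 0 < q else true),
   g k + p k = (if (k <= us)%N then ln (lam k) else 0), 0 <= phi k &
   forall q, 0 < q -> mu k * (ln (a k + b k * (s k / (s k + q))) - ln (a k))
      - nu * ((ln (a k + b k * (s k / (s k + q))) - ln (a k)) + ln (1 + s k / q)) <= phi k].
  move=> k.
  case: (boolP (k <= us)%N) => hk.
    have := @tstar R (mu k) (a k) (b k) (s k) (P k) y (mu0 k) (a0 k) (b0 k) (s0 k) (hP k).
    rewrite -omE => /(_ (act k hk)) /=.
    set q := (s k * a k + P k) / _.
    case=> l1 q0 teq lneq.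
    have hQ : Qs k = Some q.
      rewrite /Qs /Qstar /lambda_star hk /=.
      have : (mu k * bcoef N alpha P dr k / acoef M N alpha P dd k *
        (xs + omega M N alpha P dd dr mu us - 1 / mu k) == 1) = false.
        by apply/negbTE; rewrite gt_eqF.
      by move=> ->.
    have gE : g k = ln (a k + b k * (s k / (s k + q))) - ln (a k).
      by rewrite /g (Irate_some _ _ _ _ _ (dr0 k) q0 hQ).
    have pE : p k = ln (1 + s k / q) by rewrite /p hQ qpen_some.
    have t0 : 0 < s k / (s k + q) by apply: divr_gt0 => //; have := s0 k; lra.
    have t1 : s k / (s k + q) < 1 by rewrite ltr_pdivrMr ?mul1r; have := s0 k; lra.
    have phiE : phi k = Ff (mu k) nu (a k) (b k) (s k / (s k + q)).
      by rewrite /phi gE pE conv.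
    split; first split.
    - rewrite gE subr_ge0 ler_ln ?posrE //; first by have := mulr_gt0 (b0 k) t0; lra.
      by have := a0 k; have := mulr_gt0 (b0 k) t0; lra.
    - by rewrite pE ln_ge0 //; have := divr_gt0 (s0 k) q0; lra.
    - by rewrite hQ.
    - by rewrite gE pE lneq.
    - have -> : 0 = Ff (mu k) nu (a k) (b k) 0.
        by rewrite /Ff !mulr0 !addr0 !subr0 ln1 subrr; ring.
      rewrite phiE; apply: Fbound => //; rewrite ?lexx ?ltr01 ?(ltW t0) ?t1 //.
      by left.
    move=> q' q'0; rewrite conv // phiE; apply: Fbound => //.
    + apply/andP; split; first by apply/ltW/divr_gt0 => //; have := s0 k; lra.
      by rewrite ltr_pdivrMr ?mul1r; have := s0 k; lra.
    + by rewrite (ltW t0) t1.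
    + by left.
  have hQ : Qs k = None by rewrite /Qs /Qstar /lambda_star (negbTE hk) eqxx.
  have gE : g k = 0 by rewrite /g (Irate_none _ _ _ _ _ _ hQ) subrr.
  have pE : p k = 0 by rewrite /p hQ.
  have phiE : phi k = Ff (mu k) nu (a k) (b k) 0.
    by rewrite /phi gE pE /Ff !mulr0 !addr0 !subr0 ln1 subrr; ring.
  (split; first split); rewrite ?gE ?pE ?hQ ?addr0 //.
    by rewrite /phi gE pE mulr0 addr0 mulr0 subrr.
  move=> q' q'0; rewrite conv // phiE; apply: Fbound => //.
  + apply/andP; split; first by apply/ltW/divr_gt0 => //; have := s0 k; lra.
    by rewrite ltr_pdivrMr ?mul1r; have := s0 k; lra.
  + by rewrite lexx ltr01.
  + right; split => //.
    have := inact k; rewrite ltnNge hk => /(_ isT); rewrite omE.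
    rewrite ler_pdivlMr; last exact: mulr_gt0 (mu0 k) (b0 k).
    move=> h.
    have := ler_wpM2l (ltW nu0) h; rewrite /nu mulrA mulVf ?gt_eqF // mul1r.
    by rewrite mulrC.
have lamp : forall k : 'I_K, (k <= us)%N -> 0 < lam k.
  move=> k hk; rewrite /lam; apply: mulr_gt0.
    by apply: divr_gt0 => //; apply: mulr_gt0.
  have := act k hk; have := omsub k.
  have : 0 < a k / (mu k * b k) by apply: divr_gt0 => //; apply: mulr_gt0.
  lra.
have sumgp : \sum_(k < K) (g k + p k) = ln (lambda_s M N Pr ddr alpha).
  rewrite (eq_bigr (fun k : 'I_K => if (k <= us)%N then ln (lam k) else 0)); last first.
    by move=> k _; case: (user k).
  rewrite -big_mkcond -ln_prod //.
  congr ln; rewrite /lam big_split /= lsE mulrCA -big_split /= big1 ?mulr1 //.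
  move=> k _; have := a0 k; have := mu0 k; have := b0 k => hb hm ha.
  by field; rewrite !gt_eqF.
have z0 : 0 < 1 + Pr * (M%:R - N%:R) / (N%:R * ddr `^ alpha).
  have : 0 < Pr * (M%:R - N%:R) / (N%:R * ddr `^ alpha).
    apply: divr_gt0; first exact: mulr_gt0.
    by apply: mulr_gt0 => //; apply: powR_gt0.
  lra.
have lnls : ln (lambda_s M N Pr ddr alpha) =
    N%:R * Cap (Pr * (M%:R - N%:R) / (N%:R * ddr `^ alpha)).
  by rewrite /lambda_s lnXn // [RHS]mulr_natl.
have xiE : xi M N Pr ddr alpha dr Qs = \sum_(k < K) g k.
  by rewrite /xi -lnls -sumgp big_split /= addrK.
have subsum : forall (L : {set 'I_K}) (f : 'I_K -> R), (forall k, 0 <= f k) ->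
    \sum_(k in L) f k <= \sum_(k < K) f k.
  move=> L f hf'; rewrite big_mkcond /=; apply: ler_sum => k _.
  by case: ifP => _; rewrite ?lexx ?hf'.
have g0 : forall k, 0 <= g k by move=> k; case: (user k) => [[]].
exists (fun k => Irate M N alpha P dd dr Qs k); split.
  split.
  - move=> k; split => //; rewrite /Jrate xiE.
    have := subsum [set k] g g0; rewrite big_set1.
    rewrite /g /Cap /a /acoef; lra.
  - move=> k; case: (user k) => _ h _ _ _; move: h; rewrite /Qs; case: (Qstar M N alpha P dd dr mu us xs k) => //.
  - move=> L; rewrite /JLam xiE.
    have := subsum L g g0.
    have -> : \sum_(k in L) Irate M N alpha P dd dr Qs k =
              \sum_(k in L) g k + \sum_(k in L) Cap (dsnr M N alpha (P k) (dd k)).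
      by rewrite -big_split; apply: eq_bigr => k _; rewrite /g; exact: (esym (subrK _ _)).
    lra.
move=> Rv Q [HI HQ HL].
have Q0 : forall k, 0 < Q k by move=> k; have := HQ k.
pose G' k := ln (a k + b k * (s k / (s k + Q k))) - ln (a k).
pose p' k := ln (1 + s k / Q k).
have IrE : forall k, Irate M N alpha P dd dr (fun k => Some (Q k)) k = G' k + ln (a k).
  by move=> k; rewrite (Irate_some _ _ _ _ N1 (dr0 k) (Q0 k) (erefl _)) /G' subrK.
have pE' : forall k, qpen N alpha (dr k) (Some (Q k)) = p' k.
  by move=> k; rewrite qpen_some.
have p'0 : forall k, 0 <= p' k.
  by move=> k; rewrite /p' ln_ge0 //; have := divr_gt0 (s0 k) (Q0 k); lra.
pose r k := Rv k - ln (a k).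
pose rp k := if 0 < r k then r k else 0.
have hr : \sum_(k < K) rp k + \sum_(k < K) p' k <= ln (lambda_s M N Pr ddr alpha).
  have sP : \sum_(k < K) qpen N alpha (dr k) (Some (Q k)) = \sum_(k < K) p' k.
    by apply: eq_bigr => k _; exact: pE' k.
  have := HL [set k | 0 < r k]; rewrite /JLam /xi /= sP -lnls.
  have -> : \sum_(k < K) rp k = \sum_(k in [set k | 0 < r k]) Rv k -
      \sum_(k in [set k | 0 < r k]) Cap (dsnr M N alpha (P k) (dd k)).
    rewrite -sumrB [RHS]big_mkcond /=; apply: eq_bigr => k _.
    by rewrite inE /rp; case: ifP.
  lra.
have perk : forall k, mu k * Rv k <= mu k * g k - nu * (g k + p k)
      + nu * (rp k + p' k) + mu k * ln (a k).
  move=> k.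
  case: (user k) => _ _ _ phi0 /(_ (Q k) (Q0 k)); rewrite -/(G' k) -/(p' k) => hb.
  apply: (perk_gen (mu0 k) nu0 (p'0 k) phi0 _ hb).
  by case: (HI k) => h _; move: h; rewrite IrE; lra.
have e3 : objective mu (fun k => Irate M N alpha P dd dr Qs k) =
    \sum_(k < K) (mu k * g k) + \sum_(k < K) mu k * ln (a k).
  by rewrite /objective -big_split /=; apply: eq_bigr => k _; rewrite /g mulrBr subrK.
rewrite e3 /objective.
have h : \sum_(k < K) mu k * Rv k <= \sum_(k < K) (mu k * g k - nu * (g k + p k)
      + nu * (rp k + p' k) + mu k * ln (a k)).
  by apply: ler_sum => k _; exact: perk k.
rewrite sum_lin sumgp in h.
have := ler_wpM2l (ltW nu0) hr.
lra.
Qed.
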